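(* Let $n\ge 1$ and $m\ge 2$ be integers with $m\nmid n$, let $\ell=\lfloor n/m\rfloor$, and let $G_{n,m}=\{\theta_{m,0}+\sum_{k=1}^{\ell}a_k\theta_{m,k}: a_k\in\mathbb{F}_2\}$. If $f,g\in G_{n,m}$, then $f\circ g\in G_{n,m}$. In particular, $(G_{n,m},\circ)$ is a monoid.
   Context: For $x=(x_0,\dots,x_{n-1})\in\mathbb{F}_2^n$, indices of coordinates are taken modulo $n$. For a nonnegative integer $k$, the map $\theta_{m,k}\colon\mathbb{F}_2^n\to\mathbb{F}_2^n$ is defined by $\theta_{m,k}(x)=y$ with $y_i=x_{i+mk}\prod_{1\le j\le mk-1,\ m\nmid j}(x_{i+j}+1)$ for $i\in\{0,\dots,n-1\}$; $\theta_{m,0}$ is the identity map. Sums of maps are pointwise sums over $\mathbb{F}_2^n$, and $\circ$ denotes composition of maps. *)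

(* Defs.v *)
(* Vectors of F_2^n are {ffun 'I_n -> bool};
   F_2 addition is xor (addb), F_2 multiplication is andb, x+1 is negb x. *)
From mathcomp Require Import all_boot.
Set Implicit Arguments. Unset Strict Implicit. Unset Printing Implicit Defensive.

Definition vec (n : nat) := {ffun 'I_n -> bool}.

Definition shift (n : nat) (i : 'I_n) (j : nat) : 'I_n :=
  Ordinal (ltn_pmod (i + j) (leq_ltn_trans (leq0n i) (ltn_ord i))).

Definition theta (n m k : nat) (x : vec n) : vec n :=
  if k is 0 then x else
  [ffun i => x (shift i (m * k)) &&
     \big[andb/true]_(1 <= j < m * k | ~~ (m %| j)) ~~ x (shift i j)].

Definition Gmap (n m : nat) (a : nat -> bool) (x : vec n) : vec n :=
  [ffun i => theta m 0 x i (+)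
     \big[addb/false]_(1 <= k < (n %/ m).+1) (a k && theta m k x i)].

Definition inG (n m : nat) (f : vec n -> vec n) : Prop :=
  exists a : nat -> bool, forall x, f x = Gmap m a x.

(* Main.v *)
Require Import Defs.
From mathcomp Require Import all_boot zify.
Set Implicit Arguments. Unset Strict Implicit. Unset Printing Implicit Defensive.

Lemma shiftD n (i : 'I_n) u v : shift (shift i u) v = shift i (u + v).
Proof. apply: val_inj; rewrite /= modnDml addnA; done. Qed.

Lemma shift_mod n (i : 'I_n) u : shift i (u + n) = shift i u.
Proof. apply: val_inj; rewrite /= addnA modnDr; done. Qed.

Lemma thetaP n m t (x : vec n) (i : 'I_n) : 0 < t ->
  reflect (x (shift i (m * t)) /\
           forall j, 0 < j -> j < m * t -> ~~ (m %| j) -> x (shift i j) = false)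
          (theta m t x i).
Proof.
case: t => // t _; rewrite /theta ffunE big_all_cond.
apply: (iffP andP) => [[H1 /allP H2]|[H1 H2]]; split => //.
- move=> j j0 jl jm; have := H2 j; rewrite mem_iota j0 /=.
  have -> : j < 1 + (m * t.+1 - 1) by lia.
  by rewrite jm /= => /(_ isT) /negbTE.
- apply/allP => j; rewrite mem_iota => /andP [j0 jl].
  apply/implyP => jm; rewrite H2 //; move: jl; case: (m * t.+1) => [|q]; rewrite ?add1n ?subn1 //= ltnS; lia.
Qed.

Lemma xor_ex (r : seq nat) (P : pred nat) (F : nat -> bool) :
  \big[addb/false]_(j <- r | P j) F j -> exists2 j, j \in r & P j && F j.
Proof.
elim: r => [|a r IH]; first by rewrite big_nil.
rewrite big_cons; case: ifP => Pa.
- case Fa: (F a); first by move=> _; exists a; rewrite ?mem_head ?Pa.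
  by rewrite /= => /IH [j jr jP]; exists j; rewrite // in_cons jr orbT.
- by move=> /IH [j jr jP]; exists j; rewrite // in_cons jr orbT.
Qed.

Lemma xor_odd (I : Type) (r : seq I) (P : pred I) (F : I -> bool) :
  \big[addb/false]_(j <- r | P j) F j = odd (\sum_(j <- r | P j) F j).
Proof.
rewrite (big_morph odd oddD (erefl (odd 0))).
by apply: eq_bigr => j _; rewrite oddb.
Qed.


Lemma thetaSP n m t (x : vec n) (i : 'I_n) u : 0 < t ->
  reflect (x (shift i (u + m * t)) /\
           forall j, 0 < j -> j < m * t -> ~~ (m %| j) -> x (shift i (u + j)) = false)
          (theta m t x (shift i u)).
Proof.
move=> t0; apply: (iffP (thetaP _ _ _ t0)); rewrite shiftD => -[H1 H2]; split => //.
  by move=> j *; rewrite -shiftD H2.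
by move=> j *; rewrite shiftD H2.
Qed.

Lemma dv3 m a b c : a + b = c -> m %| b -> (m %| a) = (m %| c).
Proof. by move=> <- ?; rewrite dvdn_addl. Qed.

Lemma dv3' m a b c : a + b = c -> m %| a -> (m %| b) = (m %| c).
Proof. by move=> <- ?; rewrite dvdn_addr. Qed.

Lemma theta_kill n m s (x : vec n) (i : 'I_n) w : 0 < s -> 0 < w -> w < m * s ->
  ~~ (m %| w) -> x (shift i w) -> theta m s x i = false.
Proof.
move=> s0 w0 ws wm xw; apply/negP => /(thetaP _ _ _ s0) [_ H].
by rewrite H in xw.
Qed.

Lemma theta_big n m t (x : vec n) (i : 'I_n) : 0 < n -> 0 < m -> ~~ (m %| n) ->
  n %/ m < t -> theta m t x i = false.
Proof.
move=> n0 m0 mn lt; have t0 : 0 < t by move: lt; case: t.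
have nlt : n < m * t.
  apply: (leq_trans (ltn_ceil n m0)); rewrite mulnC leq_mul2l; lia.
apply/negP => /(thetaP _ _ _ t0) [H1 H2].
have md : ~~ (m %| m * t - n).
  apply/negP => md; move: mn; rewrite (@dv3' m (m * t - n) n (m * t)) //; last by lia.
  by rewrite dvdn_mulr.
have := H2 (m * t - n); rewrite -(shift_mod i) subnK; last by lia.
rewrite H1 md => H; have // : true = false by apply: H => //; lia.
Qed.


Lemma key n m k b (x : vec n) (i : 'I_n) : 0 < n -> 1 < m -> ~~ (m %| n) ->
  0 < k -> k <= n %/ m ->
  theta m k (Gmap m b x) i = theta m k x i (+)
    \big[addb/false]_(1 <= j < (n %/ m).+1) (b j && theta m (k + j) x i).
Proof.
move=> n0 m1 mn k0 kL; set L := n %/ m.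
have YE : forall u, Gmap m b x (shift i u) = x (shift i u) (+)
   \big[addb/false]_(1 <= t < L.+1) (b t && theta m t x (shift i u)).
  by move=> u; rewrite /Gmap ffunE.
have dA : forall a q, (m %| a + m * q) = (m %| a).
  by move=> a q; rewrite dvdn_addl // dvdn_mulr.
have dA' : forall a q, (m %| m * q + a) = (m %| a).
  by move=> a q; rewrite dvdn_addr // dvdn_mulr.
have mpos : forall q, 0 < q -> 0 < m * q.
  by move=> q q0; rewrite muln_gt0 q0 andbT; lia.
have mle : forall q r, q <= r -> m * q <= m * r.
  by move=> q r qr; rewrite leq_mul2l qr orbT.
case: (boolP (has (fun w => [&& 0 < w, ~~ (m %| w) & x (shift i w)]) (iota 0 (m * k)))).
- case/hasP => w; rewrite mem_iota add0n => /andP[_ wk] /and3P [w0 wm xw].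
  have Z : forall s, k <= s -> theta m s x i = false.
    move=> s ks; apply: (theta_kill (w:=w)) => //; first lia.
    by apply: (leq_trans wk); apply: mle.
  rewrite Z // big1 => [|j _]; last by rewrite Z ?andbF //; lia.
  rewrite /=.
  have exP : exists p, [&& 0 < p, p < m * k, ~~ (m %| p) & x (shift i p)].
    by exists w; rewrite w0 wk wm xw.
  have ubP : forall p, [&& 0 < p, p < m * k, ~~ (m %| p) & x (shift i p)] -> p <= m * k.
    by move=> p /and4P [_ pk _ _]; apply: ltnW.
  case: (ex_maxnP exP ubP) => p /and4P [p0 pk pm xp] pmax.
  apply/negP => /(thetaP _ _ _ k0) [Hmk Hall].
  have := Hall p p0 pk pm; rewrite YE xp /= => /negbFE.
  case/xor_ex => t; rewrite mem_iota => /andP [t1 tL] /andP[_ /andP[bt /(thetaSP _ _ _ _ t1)[Xpt Zp]]].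
  have ptm : ~~ (m %| p + m * t) by rewrite dA.
  have mt0 := mpos t t1.
  have gt : m * k < p + m * t.
    case: (ltngtP (m * k) (p + m * t)) => // [lt|E].
      have := pmax (p + m * t); rewrite ptm Xpt lt !andbT.
      have -> : 0 < p + m * t by lia.
      move=> /(_ isT); lia.
    by move: ptm; rewrite -E dvdn_mulr.
  have Xmk : x (shift i (m * k)) = false.
    have := Zp (m * k - p); rewrite subnKC; last by lia.
    apply; try lia.
    apply/negP => d; move: pm; rewrite (@dv3 m p (m * k - p) (m * k)) ?dvdn_mulr //.
    lia.
  move: Hmk; rewrite YE Xmk /= => /xor_ex [s]; rewrite mem_iota => /andP[s1 sL].
  move=> /andP[_ /andP[_ /(thetaSP _ _ _ _ s1) [Xs Zs]]].
  have ms0 := mpos s s1.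
  case: (ltngtP (m * k + m * s) (p + m * t)) => [lt|gt'|E].
  + have := Zp (m * k + m * s - p); rewrite subnKC; last by lia.
    rewrite Xs => H; have // : true = false.
    apply: H; try lia.
    apply/negP => d; move: pm; rewrite (@dv3 m p (m * k + m * s - p) (m * k + m * s)) //.
      by rewrite dvdn_add // dvdn_mulr.
    lia.
  + have := Zs (p + m * t - m * k); rewrite subnKC; last by lia.
    rewrite Xpt => H; have // : true = false.
    apply: H; try lia.
    rewrite (@dv3' m (m * k) (p + m * t - m * k) (p + m * t)) ?dvdn_mulr //.
    lia.
  + by move: ptm; rewrite -E dvdn_add // dvdn_mulr.
- move=> /hasPn Dc0.
  have Dc : forall j, 0 < j -> j < m * k -> ~~ (m %| j) -> x (shift i j) = false.
    move=> j j0 jk jm; have := Dc0 j; rewrite mem_iota add0n jk /= j0 jm /=.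
    by move=> /(_ isT) /negbTE.
  have thk : theta m k x i = x (shift i (m * k)).
    apply/idP/idP => [/(thetaP _ _ _ k0) [] // | H].
    by apply/(thetaP _ _ _ k0); split.
  have shiftth : forall t, 0 < t -> theta m t x (shift i (m * k)) = theta m (k + t) x i.
    move=> t t0; have kt0 : 0 < k + t by lia.
    apply/idP/idP => [/(thetaSP _ _ _ _ t0) [H1 H2] | /(thetaP _ _ _ kt0) [H1 H2]].
    * apply/(thetaP _ _ _ kt0); rewrite mulnDr; split => // j j0 jl jm.
      case: (ltngtP j (m * k)) => [jlt|jgt|je].
      - exact: Dc.
      - have := H2 (j - m * k); rewrite subnKC; last by lia.
        apply; try lia.
        rewrite (@dv3' m (m * k) (j - m * k) j) ?dvdn_mulr //.
        lia.
      - by move: jm; rewrite je dvdn_mulr.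
    * apply/(thetaSP _ _ _ _ t0); rewrite -mulnDr; split => // j j0 jl jm.
      apply: H2; first lia.
        by rewrite mulnDr; lia.
      by rewrite dA'.
  have YmkE : Gmap m b x (shift i (m * k)) = theta m k x i (+)
    \big[addb/false]_(1 <= j < L.+1) (b j && theta m (k + j) x i).
    rewrite YE -thk; congr addb; apply: eq_big_nat => t /andP[t1 _].
    by rewrite shiftth.
  rewrite -YmkE.
  apply/idP/idP => [/(thetaP _ _ _ k0) [] // | H].
  apply/(thetaP _ _ _ k0); split => // u u0 uk um.
  apply/negP => Yu; move: Yu; rewrite YE (Dc u) //= => /xor_ex [t].
  rewrite mem_iota => /andP[t1 tL] /andP[_ /andP[_ /(thetaSP _ _ _ _ t1)[Xut Zu]]].
  have utm : ~~ (m %| u + m * t) by rewrite dA.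
  have mt0 := mpos t t1.
  have gt : m * k < u + m * t.
    case: (ltngtP (m * k) (u + m * t)) => // [lt|E].
      by move: Xut; rewrite Dc //; lia.
    by move: utm; rewrite -E dvdn_mulr.
  have Z : forall s, k <= s -> theta m s x i = false.
    move=> s ks; have s0 : 0 < s by lia.
    have mks := mle _ _ ks.
    case: (ltngtP (m * s) (u + m * t)) => [lt|gt'|E].
    + apply/negP => /(thetaP _ _ _ s0) [Xs _].
      have := Zu (m * s - u); rewrite subnKC; last by lia.
      rewrite Xs => H'; have // : true = false.
      apply: H'; try lia.
      apply/negP => d; move: um; rewrite (@dv3 m u (m * s - u) (m * s)) ?dvdn_mulr //.
      lia.
    + by apply: (theta_kill (w := u + m * t)) => //; lia.
    + by move: utm; rewrite -E dvdn_mulr.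
  by move: H; rewrite YmkE Z // big1 // => j _; rewrite Z ?andbF //; lia.
Qed.


Lemma GmapE n m b (x : vec n) i : Gmap m b x i =
  \big[addb/false]_(0 <= j < (n %/ m).+1) (((j == 0) || b j) && theta m j x i).
Proof. by rewrite [RHS]big_nat_recl // /Gmap ffunE; congr addb; rewrite big_add1. Qed.

Lemma keyU n m k b (x : vec n) (i : 'I_n) : 0 < n -> 1 < m -> ~~ (m %| n) ->
  k <= n %/ m ->
  theta m k (Gmap m b x) i =
    \big[addb/false]_(0 <= j < (n %/ m).+1) (((j == 0) || b j) && theta m (k + j) x i).
Proof.
move=> n0 m1 mn kL; case: k kL => [|k] kL.
  by rewrite /= GmapE.
by rewrite key // [RHS]big_nat_recl // addn0; congr addb; rewrite big_add1 /=;
  apply: eq_bigr => j _; rewrite addnS.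
Qed.

Lemma delta L (F : nat -> nat) q : (forall s, L < s -> F s = 0) ->
  F q = \sum_(0 <= s < L.+1) (q == s) * F s.
Proof.
move=> HF; case: (leqP q L) => qL.
  rewrite (bigD1_seq q) ?mem_iota ?iota_uniq //=.
  rewrite eqxx mul1n big1 ?addn0 // => s /negbTE; rewrite eq_sym => ->.
  by rewrite mul0n.
rewrite HF // big1_seq // => s; rewrite mem_iota => /andP[_ sL].
have -> : (q == s) = false by apply/negbTE; apply/eqP => E; subst; lia.
by rewrite mul0n.
Qed.

Lemma odd_sum (r : seq nat) (F G : nat -> nat) : (forall i, odd (F i) = odd (G i)) ->
  odd (\sum_(i <- r) F i) = odd (\sum_(i <- r) G i).
Proof.
move=> H; rewrite !(big_morph odd oddD (erefl (odd 0))).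
by apply: eq_bigr => i _; rewrite H.
Qed.


Definition cf (L : nat) (a b : nat -> bool) (s : nat) : bool :=
  odd (\sum_(0 <= k < L.+1) \sum_(0 <= j < L.+1)
         (k + j == s) * ((k == 0) || a k) * ((j == 0) || b j)).

Lemma cf0 L a b : odd (\sum_(0 <= k < L.+1) \sum_(0 <= j < L.+1)
         (k + j == 0) * ((k == 0) || a k) * ((j == 0) || b j)).
Proof.
rewrite big_nat_recl // big_nat_recl //= big1 => [|j _]; last by rewrite mul0n.
rewrite big1 // => k _; rewrite big1 // => j _; by rewrite mul0n.
Qed.

Lemma comp n m a b (x : vec n) i : 0 < n -> 1 < m -> ~~ (m %| n) ->
  Gmap m a (Gmap m b x) i = Gmap m (cf (n %/ m) a b) x i.
Proof.
move=> n0 m1 mn; rewrite !GmapE; set L := n %/ m.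
rewrite (eq_big_nat _ _ (F2 := fun k => ((k == 0) || a k) &&
   \big[addb/false]_(0 <= j < L.+1) (((j == 0) || b j) && theta m (k + j) x i)));
  last by move=> k /andP[_ kL]; rewrite keyU //; lia.
rewrite !xor_odd.
pose Th s := nat_of_bool (theta m s x i).
have Hvan : forall s, L < s -> Th s = 0.
  by move=> s sL; rewrite /Th theta_big //; lia.
pose N s := \sum_(0 <= k < L.+1) \sum_(0 <= j < L.+1)
         (k + j == s) * ((k == 0) || a k) * ((j == 0) || b j).
transitivity (odd (\sum_(0 <= k < L.+1) ((k == 0) || a k) *
     \sum_(0 <= j < L.+1) ((j == 0) || b j) * Th (k + j))).
  apply: odd_sum => k; rewrite oddb oddM oddb xor_odd; congr (_ && odd _).
  by apply: eq_bigr => j _; rewrite mulnb.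
transitivity (odd (\sum_(0 <= s < L.+1) N s * Th s)).
  congr odd.
  under eq_bigr => k _ do under eq_bigr => j _ do rewrite (delta (F := Th) (k + j) Hvan).
  under eq_bigr => k _ do under eq_bigr => j _ do rewrite big_distrr.
  under eq_bigr => k _ do rewrite big_distrr.
  under eq_bigr => k _ do under eq_bigr => j _ do rewrite big_distrr.
  rewrite exchange_big /=.
  under eq_bigr => j _ do rewrite exchange_big.
  rewrite exchange_big /=; apply: eq_bigr => s _.
  rewrite exchange_big /N big_distrl; apply: eq_bigr => k _.
  rewrite big_distrl; apply: eq_bigr => j _.
  rewrite /=; nia.
rewrite !(big_morph odd oddD (erefl (odd 0))); apply: eq_bigr => s _.
rewrite oddM !oddb /cf -/(N s).
case: s => [|s] //=; by rewrite /N cf0.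
Qed.


Theorem theorem1 (n m : nat) (hn : 1 <= n) (hm : 2 <= m) (hmn : ~~ (m %| n)) :
  (forall f g : vec n -> vec n, inG m f -> inG m g -> inG m (f \o g))
  /\ inG m (@id (vec n)).
Proof.
split.
  move=> f g [a Ha] [b Hb]; exists (cf (n %/ m) a b) => x /=.
  rewrite Hb Ha; apply/ffunP => i; exact: comp.
exists (fun _ => false) => x; apply/ffunP => i.
by rewrite /Gmap ffunE big1 ?addbF.
Qed.
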